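(* Let $\Phi$ be the set of formulas of $NOM$, let $\mathcal Q$ be an orthomodular lattice, and let $[\![\cdot]\!]:\Phi\to\mathcal Q$ be a surjective interpretation. If every rule of inference of $NOM$ is sound in this interpretation, then for all formulas $\phi,\psi$: $[\![\phi\wedge\psi]\!]=[\![\phi]\!]\wedge[\![\psi]\!]$, $[\![\phi\rightarrow\psi]\!]=[\![\phi]\!]\rightarrow[\![\psi]\!]$ (Sasaki arrow), and $[\![\neg\phi]\!]=\neg[\![\phi]\!]$.
   Context: The propositional deductive system $NOM$: formulas are built from propositional letters using $\wedge$, $\rightarrow$, $\neg$. Sequents are $\phi_1,\ldots,\phi_n\vdash\psi$ ($n\ge0$) with antecedent a finite ordered sequence. With $\Gamma$ a finite possibly empty sequence of formulas and $\phi,\psi,\chi$ formulas, the rules of $NOM$ are: (assumption) $\Gamma,\phi\vdash\phi$; (cut) $\Gamma\vdash\phi$, $\Gamma,\phi\vdash\psi$ $\Rightarrow$ $\Gamma\vdash\psi$; (paste) $\Gamma\vdash\phi$, $\Gamma\vdash\psi$ $\Rightarrow$ $\Gamma,\phi\vdash\psi$; (compatible exchange) $\Gamma,\phi,\psi\vdash\phi$, $\Gamma,\phi,\psi\vdash\chi$, $\Gamma,\psi,\phi\vdash\psi$ $\Rightarrow$ $\Gamma,\psi,\phi\vdash\chi$; ($\wedge$-intro) $\Gamma\vdash\phi$, $\Gamma\vdash\psi$ $\Rightarrow$ $\Gamma\vdash\phi\wedge\psi$; ($\wedge$-elim) $\Gamma\vdash\phi\wedge\psi$ $\Rightarrow$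 $\Gamma\vdash\phi$ and $\Rightarrow$ $\Gamma\vdash\psi$; ($\rightarrow$-intro) $\Gamma,\phi\vdash\psi$ $\Rightarrow$ $\Gamma\vdash\phi\rightarrow\psi$; ($\rightarrow$-elim) $\Gamma\vdash\phi\rightarrow\psi$ $\Rightarrow$ $\Gamma,\phi\vdash\psi$; (excluded middle) $\Gamma,\phi\vdash\psi$, $\Gamma,\neg\phi\vdash\psi$ $\Rightarrow$ $\Gamma\vdash\psi$; (explosion) $\Gamma\vdash\neg\phi$ $\Rightarrow$ $\Gamma,\phi\vdash\psi$. An orthomodular lattice is a bounded lattice with an order-reversing involution $\neg$ satisfying $a\wedge\neg a=\bot$, $a\vee\neg a=\top$, and $a\le b\Rightarrow a\vee(\neg a\wedge b)=b$. In it, $a\mathbin{\&}b=(a\vee\neg b)\wedge b$ and $a\rightarrow b=\neg a\vee(a\wedge b)$; $\&$ associates to the left and $a_1\mathbin{\&}\cdots\mathbin{\&}a_n=\top$ when $n=0$. An interpretation is any function $[\![\cdot]\!]:\Phi\to\mathcal Q$ into an orthomodular lattice. A sequent $\phi_1,\ldots,\phi_n\vdash\psi$ is true in it if $[\![\phi_1]\!]\mathbin{\&}\cdots\mathbin{\&}[\![\phi_n]\!]\le[\![\psi]\!]$; a rule of inference is sound if, in every instance, its conclusion is true whenever all its premises are true. *)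

(* Defs.v *)
From HB Require Import structures.
From mathcomp Require Import all_boot all_order.
Set Implicit Arguments. Unset Strict Implicit. Unset Printing Implicit Defensive.
Import Order.TTheory.
Local Open Scope order_scope.

Inductive formula : Type :=
  | Var : nat -> formula
  | And : formula -> formula -> formula
  | Imp : formula -> formula -> formula
  | Neg : formula -> formula.

Section OML.
Context {disp : Order.disp_t} {L : tbLatticeType disp}.

Definition orthomodular (neg : L -> L) : Prop :=
  [/\ (forall a b : L, a <= b -> neg b <= neg a),
      (forall a : L, neg (neg a) = a),
      (forall a : L, a `&` neg a = \bot),
      (forall a : L, a `|` neg a = \top) &
      (forall a b : L, a <= b -> a `|` (neg a `&` b) = b)].

Definition sand (neg : L -> L) (a b : L) : L := (a `|` neg b) `&` b.
Definition simp (neg : L -> L) (a b : L) : L := neg a `|` (a `&` b).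

Definition sand_seq (neg : L -> L) (s : seq L) : L :=
  match s with
  | [::] => \top
  | a :: s' => foldl (sand neg) a s'
  end.

Definition seq_true (neg : L -> L) (I : formula -> L)
    (G : seq formula) (psi : formula) : Prop :=
  sand_seq neg (map I G) <= I psi.

(* Soundness of every rule of NOM (Gamma, phi is rcons Gamma phi). *)
Definition nom_sound (neg : L -> L) (I : formula -> L) : Prop :=
  let T := seq_true neg I in
  (forall G phi, T (rcons G phi) phi) /\
  (forall G phi psi, T G phi -> T (rcons G phi) psi -> T G psi) /\
  (* paste *)
  (forall G phi psi, T G phi -> T G psi -> T (rcons G phi) psi) /\
  (* compatible exchange *)
  (forall G phi psi chi,
      T (rcons (rcons G phi) psi) phi ->
      T (rcons (rcons G phi) psi) chi ->
      T (rcons (rcons G psi) phi) psi ->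
      T (rcons (rcons G psi) phi) chi) /\
  (forall G phi psi, T G phi -> T G psi -> T G (And phi psi)) /\
  (forall G phi psi, T G (And phi psi) -> T G phi) /\
  (forall G phi psi, T G (And phi psi) -> T G psi) /\
  (forall G phi psi, T (rcons G phi) psi -> T G (Imp phi psi)) /\
  (forall G phi psi, T G (Imp phi psi) -> T (rcons G phi) psi) /\
  (forall G phi psi, T (rcons G phi) psi -> T (rcons G (Neg phi)) psi ->
      T G psi) /\
  (forall G phi psi, T G (Neg phi) -> T (rcons G phi) psi).

End OML.

(* Main.v *)
Require Import Defs.
From mathcomp Require Import all_boot all_order.
Local Open Scope order_scope.
Import Order.TTheory.

Section H.
Context {disp : Order.disp_t} {L : tbLatticeType disp} (neg : L -> L).
Hypothesis OM : orthomodular neg.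

Lemma n_anti {a b} : a <= b -> neg b <= neg a.
Proof. by move: OM; rewrite /orthomodular => -[h _ _ _ _]; exact: h. Qed.
Lemma nK a : neg (neg a) = a.
Proof. by move: OM; rewrite /orthomodular => -[_ h _ _ _]; exact: h. Qed.
Lemma n_meet a : a `&` neg a = \bot.
Proof. by move: OM; rewrite /orthomodular => -[_ _ h _ _]; exact: h. Qed.
Lemma n_om {a b} : a <= b -> a `|` (neg a `&` b) = b.
Proof. by move: OM; rewrite /orthomodular => -[_ _ _ _ h]; exact: h. Qed.

Lemma negU x y : neg (x `|` y) = neg x `&` neg y.
Proof.
apply: le_anti; rewrite lexI !n_anti ?leUl ?leUr //=.
rewrite -[X in X <= _]nK; apply: n_anti; rewrite leUx.
by apply/andP; split; rewrite -[X in X <= _]nK; apply: n_anti;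
  [exact: leIl | exact: leIr].
Qed.

Lemma negI x y : neg (x `&` y) = neg x `|` neg y.
Proof. by rewrite -[x]nK -[y]nK -negU !nK. Qed.

Lemma negT : neg \top = \bot.
Proof. by rewrite -(n_meet \top) meet1x. Qed.

Lemma sasaki0 n a : (n `|` neg a) `&` a = \bot -> n <= neg a.
Proof.
move=> H. have h : neg a <= n `|` neg a by exact: leUr.
have := n_om h; rewrite nK meetC H joinx0 => ->; exact: leUl.
Qed.

Lemma omdual x a : x <= a -> (neg a `|` x) `&` a = x.
Proof.
move=> xa. rewrite -[LHS](nK ((neg a `|` x) `&` a)) negI (negU (neg a) x) (nK a).
have h := n_anti xa. have e := n_om h; rewrite (nK a) in e. by rewrite joinC e nK.
Qed.
End H.
Arguments n_om {disp L neg} OM {a b}.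
Arguments nK {disp L neg} OM a.
Arguments negU {disp L neg} OM x y.
Arguments negT {disp L neg} OM.
Arguments sasaki0 {disp L neg} OM n a.
Arguments omdual {disp L neg} OM x a.

Theorem proposition3p4 (disp : Order.disp_t) (L : tbLatticeType disp)
    (neg : L -> L) (I : formula -> L) :
  orthomodular neg ->
  (forall q : L, exists phi : formula, I phi = q) ->
  nom_sound neg I ->
  forall phi psi : formula,
    [/\ I (And phi psi) = I phi `&` I psi,
        I (Imp phi psi) = simp neg (I phi) (I psi) &
        I (Neg phi) = neg (I phi)].
Proof.
move=> OM surj [hAs [hCut [hPaste [hEx [hAI [hAE1 [hAE2 [hII [hIE [hEM hExp]]]]]]]]]].
move=> phi psi.
have As1 : forall f, I f <= I f by move=> f; exact: lexx.
split.
- apply: le_anti; apply/andP; split.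
  + rewrite lexI; apply/andP; split.
    * exact: (hAE1 [:: And phi psi] phi psi (As1 _)).
    * exact: (hAE2 [:: And phi psi] phi psi (As1 _)).
  + have [c hc] := surj (I phi `&` I psi).
    have := hAI [:: c] phi psi; rewrite /seq_true /= hc; apply.
    * exact: leIl.
    * exact: leIr.
- set a := I phi; set b := I psi; set i := I (Imp phi psi).
  apply: le_anti; apply/andP; split.
  + have h := hIE [:: Imp phi psi] phi psi (As1 _).
    move: h; rewrite /seq_true /= /sand -/a -/b -/i => h.
    have h2 : (i `|` neg a) `&` a <= a `&` b by rewrite lexI h leIr.
    have hm : neg a <= i `|` neg a by exact: leUr.
    have := n_om OM hm; rewrite (nK OM) => e.
    apply: (le_trans (leUl i (neg a))); rewrite -e /simp.
    by apply: leU2 => //; rewrite meetC.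
  + have [c hc] := surj (simp neg a b).
    have := hII [:: c] phi psi; rewrite /seq_true /= /sand hc -/a -/b -/i; apply.
    rewrite /simp (join_l (x := neg a `|` (a `&` b))) ?leUl //.
    by rewrite (omdual OM); [exact: leIr | exact: leIl].
- set a := I phi; set n := I (Neg phi).
  have [z hz] := surj \bot.
  have h0 := hExp [:: Neg phi] phi z (As1 _).
  move: h0; rewrite /seq_true /= /sand hz -/a -/n => h0.
  have hn : n <= neg a by apply: (sasaki0 OM); apply: le_anti; rewrite h0 le0x.
  have [w hw] := surj (a `|` n).
  have := hEM [::] phi w; rewrite /seq_true /= hw -/a -/n => h1.
  have top : a `|` n = \top.
    by apply/eqP; rewrite -le1x; apply: h1; [exact: leUl | exact: leUr].
  have := n_om OM hn. by rewrite -(negU OM) (joinC n a) top (negT OM) joinx0.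
Qed.
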